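(* Consider a seller with one item and a single ex-interim rational buyer; the item's quality $q\in Q=[q_1,q_2]$ has density $g$ and is observed only by the seller; the buyer's valuation is $v(q)\ge0$, monotone increasing in $q$. Consider the problem of maximizing $Rev_{sig}(\pi,p)=p\int_Q\pi(q)g(q)\,\mathrm{d}q$ over $\pi:Q\to[0,1]$ and $p$ subject to $\int_Q\pi(q)[v(q)-p]g(q)\,\mathrm{d}q\ge0$ and $\int_Q\pi(q)[v(q)-p]g(q)\,\mathrm{d}q\ge\mathbb{E}_{q}[v(q)]-p$. Then $\pi^*(q)=1$ for all $q\in Q$ and $p^*=\mathbb{E}_q[v(q)]$ form an optimal solution.
   Context: $\pi(q)$ is the probability that the seller sends signal 1 (''buy'') at quality $q$, and signal 0 (''not buy'') otherwise; the constraints express obedience of an ex-interim rational buyer, who buys iff his posterior expected valuation of the item is at least $p$. $\mathbb{E}_q$ denotes expectation under the prior density $g$. *)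

(* Defs.v *)
From HB Require Import structures.
From mathcomp Require Import all_boot all_order all_algebra.
From mathcomp Require Import all_classical all_reals all_analysis.
Set Implicit Arguments. Unset Strict Implicit. Unset Printing Implicit Defensive.
Import Order.TTheory GRing.Theory Num.Theory.
Local Open Scope classical_set_scope.
Local Open Scope ring_scope.

Definition Qset {R : realType} (q1 q2 : R) : set R := `[q1, q2].

Definition Eq {R : realType} (q1 q2 : R) (g v : R -> R) : R :=
  Rintegral lebesgue_measure (Qset q1 q2) (fun q => v q * g q).

Definition Rev_sig {R : realType} (q1 q2 : R) (g : R -> R)
  (pi : R -> R) (p : R) : R :=
  p * Rintegral lebesgue_measure (Qset q1 q2) (fun q => pi q * g q).

Definition admissible_signal {R : realType} (q1 q2 : R) (pi : R -> R) : Prop :=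
  measurable_fun (Qset q1 q2) pi /\
  (forall q, q \in Qset q1 q2 -> 0 <= pi q <= 1).

Definition obedient {R : realType} (q1 q2 : R) (g v : R -> R)
  (pi : R -> R) (p : R) : Prop :=
  let lhs := Rintegral lebesgue_measure (Qset q1 q2)
               (fun q => pi q * (v q - p) * g q) in
  0 <= lhs /\ Eq q1 q2 g v - p <= lhs.

Definition feasible {R : realType} (q1 q2 : R) (g v : R -> R)
  (pi : R -> R) (p : R) : Prop :=
  admissible_signal q1 q2 pi /\ obedient q1 q2 g v pi p.

Definition optimal_solution {R : realType} (q1 q2 : R) (g v : R -> R)
  (pi : R -> R) (p : R) : Prop :=
  feasible q1 q2 g v pi p /\
  forall pi' p', feasible q1 q2 g v pi' p' ->
    Rev_sig q1 q2 g pi' p' <= Rev_sig q1 q2 g pi p.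

(* Main.v *)
Require Import Defs.
From HB Require Import structures.
From mathcomp Require Import all_boot all_order all_algebra.
From mathcomp Require Import all_classical all_reals all_analysis.
From mathcomp Require Import ring.
Import Order.TTheory GRing.Theory Num.Theory.
Local Open Scope classical_set_scope.
Local Open Scope ring_scope.

Theorem mainTheorem6 (R : realType) (q1 q2 : R) (g v : R -> R)
  (hq : q1 < q2)
  (g_meas : measurable_fun (Qset q1 q2) g)
  (g_ge0 : forall q, q \in Qset q1 q2 -> 0 <= g q)
  (g_int : lebesgue_measure.-integrable (Qset q1 q2) (fun q => (g q)%:E))
  (g_density : Rintegral lebesgue_measure (Qset q1 q2) g = 1)
  (v_ge0 : forall q, q \in Qset q1 q2 -> 0 <= v q)
  (v_mono : forall x y, x \in Qset q1 q2 -> y \in Qset q1 q2 ->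
              x <= y -> v x <= v y)
  (vg_int : lebesgue_measure.-integrable (Qset q1 q2)
              (fun q => (v q * g q)%:E)) :
  optimal_solution q1 q2 g v (fun _ => 1) (Eq q1 q2 g v).
Proof.
have mD : measurable (Qset q1 q2 : set (measurableTypeR R)) by exact: measurable_itv.
have gi : lebesgue_measure.-integrable (Qset q1 q2) (EFin \o g) := g_int.
have vgi : lebesgue_measure.-integrable (Qset q1 q2)
   (EFin \o (fun q => v q * g q)) := vg_int.
have Zi : forall (k : R) (f : R -> R),
    lebesgue_measure.-integrable (Qset q1 q2) (EFin \o f) ->
    lebesgue_measure.-integrable (Qset q1 q2) (EFin \o (fun q => k * f q)).
  move=> k f fi; apply: (eq_integrable _ _ _ _ (integrableZl _ k fi)); try exact: measurable_itv.
  by move=> x _ /=; rewrite EFinM.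
have Mi : forall (h f : R -> R), measurable_fun (Qset q1 q2) h ->
    (forall q, q \in Qset q1 q2 -> 0 <= h q <= 1) ->
    lebesgue_measure.-integrable (Qset q1 q2) (EFin \o f) ->
    lebesgue_measure.-integrable (Qset q1 q2) (EFin \o (fun q => h q * f q)).
  move=> h f mh hb fi.
  have bh : [bounded h x | x in Qset q1 q2].
    exists 1; split => // M M1 x Dx. rewrite /=.
    have /andP[h0 h1] := hb x (mem_set Dx).
    by rewrite ger0_norm // (le_trans h1) // ltW.
  have := @integrableMr _ _ _ lebesgue_measure _ mD h _ mh bh fi.
  by apply: eq_integrable.
set E := Eq q1 q2 g v.
split.
  split.
    split; first exact: measurable_cst.
    by move=> q _; rewrite ler01 lexx.
  rewrite /obedient.
  have -> : Rintegral lebesgue_measure (Qset q1 q2)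
      (fun q => 1 * (v q - E) * g q) = 0.
    rewrite (@eq_Rintegral _ _ _ (@lebesgue_measure R) _ (fun q => v q * g q - E * g q)); last first.
      move=> q _; have e : forall x : R, 1 * (v x - E) * g x = v x * g x - E * g x by move=> x; ring.
      exact: e.
    rewrite RintegralB //; last exact: Zi.
    by rewrite RintegralZl // g_density mulr1 subrr.
  by rewrite subrr lexx.
move=> pi' p' [[mpi bpi] [h0 _]].
have pgi := Mi _ _ mpi bpi gi.
have pvgi := Mi _ _ mpi bpi vgi.
move: h0.
rewrite (@eq_Rintegral _ _ _ (@lebesgue_measure R) _
   (fun q => pi' q * (v q * g q) - p' * (pi' q * g q))); last first.
  move=> q _; have e : forall x : R, pi' x * (v x - p') * g x = pi' x * (v x * g x) - p' * (pi' x * g x) by move=> x; ring.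
  exact: e.
rewrite RintegralB //; last exact: Zi.
rewrite RintegralZl // subr_ge0 => h0.
rewrite /Rev_sig (le_trans h0) //.
have -> : Rintegral lebesgue_measure (Qset q1 q2) (fun q => 1 * g q) = 1.
  rewrite -[RHS]g_density; apply: eq_Rintegral => q _.
  have e : forall x : R, 1 * g x = g x by move=> x; rewrite mul1r.
  exact: e.
rewrite mulr1 /E /Eq.
apply: le_Rintegral => // q Dq.
have /andP[p0 p1] := bpi q (mem_set Dq).
rewrite ler_piMl // mulr_ge0 //; [exact: v_ge0 (mem_set Dq)| exact: g_ge0 (mem_set Dq)].
Qed.
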